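(* For any continuous map $T:X\to X$ of a compact metric space $X$, the set $Per(T)$ of periodic points is either empty or satisfies $h_{top}(T,Per(T))=0$.
   Context: $h_{top}(T,Z)$ denotes Bowen's topological entropy of an arbitrary subset $Z\subseteq X$: with $B_m(x,\varepsilon)=\{y:d(T^jx,T^jy)\le\varepsilon,0\le j<m\}$, $C(Z;t,n,\varepsilon)=\inf\sum_i2^{-tm_i}$ over countable covers of $Z$ by $B_{m_i}(x_i,\varepsilon)$ with $m_i\ge n$, $h(Z,\varepsilon)=\inf\{t:\lim_nC(Z;t,n,\varepsilon)=0\}$, $h_{top}(T,Z)=\lim_{\varepsilon\to0}h(Z,\varepsilon)$. *)

(* Defs.v *)
From HB Require Import structures.
From mathcomp Require Import all_boot all_order all_algebra.
From mathcomp Require Import all_classical all_reals all_analysis.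
Set Implicit Arguments. Unset Strict Implicit. Unset Printing Implicit Defensive.
Import Order.TTheory GRing.Theory Num.Theory.
Local Open Scope classical_set_scope.
Local Open Scope ring_scope.

Section Bowen.
Variables (R : realType) (X : Type) (d : X -> X -> R) (T : X -> X).

Definition is_metric : Prop :=
  (forall x y, d x y = 0 <-> x = y) /\ (forall x y, d x y = d y x) /\
  (forall x y z, d x z <= d x y + d y z).

Definition mopen (U : set X) : Prop :=
  forall x, U x -> exists2 e : R, 0 < e & forall y, d x y < e -> U y.

Definition mcompact : Prop :=
  forall (I : Type) (U : I -> set X), (forall i, mopen (U i)) ->
    setT `<=` \bigcup_i U i ->
    exists F : set I, finite_set F /\ setT `<=` \bigcup_(i in F) U i.

Definition mcontinuous : Prop :=
  forall x (e : R), 0 < e -> exists2 del : R, 0 < del &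
    forall y, d x y < del -> d (T x) (T y) < e.

Definition Per : set X := [set x | exists n, (0 < n)%N /\ iter n T x = x].

Definition bowen_ball (m : nat) (x : X) (eps : R) : set X :=
  [set y | forall j, (j < m)%N -> d (iter j T x) (iter j T y) <= eps].

(** a countable (possibly finite or empty) family of Bowen balls:
    [c i = Some (x_i, m_i)] is the ball B_{m_i}(x_i, eps), [None] = no ball *)
Definition is_bowen_cover (Z : set X) (n : nat) (eps : R)
  (c : nat -> option (X * nat)) : Prop :=
  (Z `<=` [set y | exists i x m, c i = Some (x, m) /\ bowen_ball m x eps y]) /\
  (forall i x m, c i = Some (x, m) -> (n <= m)%N).

Definition cover_cost (t : R) (c : nat -> option (X * nat)) : \bar R :=
  (\sum_(i <oo) (match c i with
                 | Some (_, m) => ((2 : R) `^ (- t * m%:R))%:E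
                 | None => 0%E end))%E.

Definition bowenC (Z : set X) (t : R) (n : nat) (eps : R) : \bar R :=
  ereal_inf [set cover_cost t c | c in is_bowen_cover Z n eps].

Definition bowen_h (Z : set X) (eps : R) : \bar R :=
  ereal_inf [set t%:E | t in [set t : R | bowenC Z t n eps @[n --> \oo] --> 0%E]].

End Bowen.

(* Main.v *)
Require Import Defs.
From HB Require Import structures.
From mathcomp Require Import all_boot all_order all_algebra.
From mathcomp Require Import all_classical all_reals all_analysis lra.
Import Order.TTheory GRing.Theory Num.Theory.
Local Open Scope classical_set_scope.
Local Open Scope ring_scope.

Section S.
Variables (R : realType) (X : Type) (d : X -> X -> R) (T : X -> X).
Hypothesis hd : is_metric d.
Hypothesis hT : mcontinuous d T.

Lemma d0 x : d x x = 0.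
Proof. by case: hd => h _; apply/h. Qed.
Lemma dsym x y : d x y = d y x.
Proof. by case: hd => _ [h _]. Qed.
Lemma dtri x y z : d x z <= d x y + d y z.
Proof. by case: hd => _ [_ h]. Qed.

Lemma iter_cont k x e : 0 < e -> exists2 del, 0 < del &
  forall y, d x y < del -> d (iter k T x) (iter k T y) < e.
Proof.
elim: k e => [|k IH] e e0 /=; first by exists e.
have [del1 d1 H1] := hT (iter k T x) e e0.
have [del2 d2 H2] := IH _ d1.
by exists del2 => // y /H2 /H1.
Qed.

Lemma iter_cont_all k x e : 0 < e -> exists2 del, 0 < del &
  forall y, d x y < del -> forall j, (j < k)%N -> d (iter j T x) (iter j T y) < e.
Proof.
move=> e0; elim: k => [|k [del1 d1 H1]]; first by exists 1.
have [del2 d2 H2] := iter_cont k x e e0.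
exists (Num.min del1 del2); first by rewrite lt_min d1 d2.
move=> y; rewrite lt_min => /andP[y1 y2] j; rewrite ltnS leq_eqVlt => /orP[/eqP->|jk].
  exact: H2.
exact: H1.
Qed.

Lemma iter_period k z : iter k T z = z -> forall a r, iter (a * k + r) T z = iter r T z.
Proof.
move=> hz; elim=> [|a IH] r; first by rewrite mul0n add0n.
by rewrite mulSn -addnA addnC iterD hz IH.
Qed.

Lemma period_ball k z y eps : (0 < k)%N -> iter k T z = z -> iter k T y = y ->
  (forall j, (j < k)%N -> d (iter j T z) (iter j T y) <= eps) ->
  forall m, bowen_ball d T m z eps y.
Proof.
move=> k0 hz hy H m j _.
rewrite (divn_eq j k) !iter_period //.
by apply: H; rewrite ltn_mod.
Qed.


Lemma fix_cover (hX : mcompact d) k eps (x0 : X) : 0 < eps ->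
  exists g : nat -> X, forall y, iter k T y = y -> exists i,
    iter k T (g i) = g i /\ forall j, (j < k)%N -> d (iter j T (g i)) (iter j T y) <= eps.
Proof.
move=> e0.
have e20 : 0 < eps / 2 by rewrite divr_gt0.
pose U (x : X) : set X := fun y => exists2 e, 0 < e & forall y', d y y' < e ->
  forall j, (j < k)%N -> d (iter j T x) (iter j T y') < eps / 2.
have Uo : forall x, mopen d (U x).
  move=> x y [e ep He]; exists (e / 2); first by rewrite divr_gt0.
  move=> y' yy'; exists (e / 2); first by rewrite divr_gt0.
  move=> y'' y'y''; apply: He.
  by rewrite (le_lt_trans (dtri y y' y'')) // [e]splitr ltrD.
have Uc : setT `<=` \bigcup_x U x.
  move=> x _; exists x => //.
  have [del dp H] := iter_cont_all k x (eps/2) e20.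
  by exists del.
have [F [Ffin FU]] := hX X U Uo Uc.
have /(@finite_seqP {classic X}) [s hs] := Ffin.
pose P i z := U (nth x0 s i) z /\ iter k T z = z.
have [g hg] : {g : nat -> X & forall i, (exists z, P i z) -> P i (g i)}.
  apply: (@choice nat X (fun i z => (exists z, P i z) -> P i z)) => i.
  case: (EM (exists z, P i z)) => [[z hz]|hn]; first by exists z.
  by exists x0.
exists g => y hy.
have [x Fx Uxy] := FU y I.
have xs : x \in s by move: Fx; rewrite hs.
pose i := @index {classic X} x s.
have ni : nth x0 s i = x by exact: (@nth_index {classic X} x0 x s xs).
have Piy : P i y by rewrite /P ni.
have [[e ep He] hgi] := hg _ (ex_intro _ y Piy).
exists i; split => // j jk.
move: He; rewrite ni => He.
have h1 := He (g i) ltac:(by rewrite d0) j jk.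
case: Uxy => e' ep' He'.
have h2 := He' y ltac:(by rewrite d0) j jk.
apply/ltW; rewrite (le_lt_trans (dtri _ (iter j T x) _)) //.
by rewrite [eps]splitr ltrD // dsym.
Qed.


Lemma geom_sum (n N : nat) :
  \sum_(0 <= p < N) ((2:R)^-1) ^+ (n + p).+1 = (2^-1) ^+ n - (2^-1) ^+ (n + N).
Proof.
elim: N => [|N IH]; first by rewrite big_geq // addn0 subrr.
rewrite big_nat_recr //= IH addnS exprS.
set a := _ ^+ (n + N). lra.
Qed.

Lemma cost_bound t (c : nat -> option (X * nat)) (n : nat) :
  (forall p, (match c p with Some (_, m) => ((2 : R) `^ (- t * m%:R))%:E | None => 0%E end
     <= ((2:R)^-1 ^+ (n + p).+1)%:E)%E) ->
  (cover_cost t c <= ((2:R)^-1 ^+ n)%:E)%E.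
Proof.
move=> Hb; rewrite /cover_cost.
have h0 : forall p, (0 <= p)%N -> true ->
  (0 <= match c p with Some (_, m) => ((2 : R) `^ (- t * m%:R))%:E | None => 0%E end)%E.
  by move=> p _ _; case: (c p) => [[_ m]|] //; rewrite lee_fin powR_ge0.
apply: lime_le; first exact: (is_cvg_nneseries h0).
apply: nearW => N.
apply: (@le_trans _ _ (\sum_(0 <= p < N) ((2:R)^-1 ^+ (n + p).+1)%:E)%E).
  by apply: lee_sum => p _; exact: Hb.
rewrite sumEFin geom_sum lee_fin lerBlDr lerDl.
by apply: exprn_ge0; rewrite invr_ge0.
Qed.

Lemma pow_bound (t : R) (K q : nat) : 1 <= t * K%:R ->
  (2 : R) `^ (- t * (K * q)%:R) <= (2^-1) ^+ q.
Proof.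
move=> tK.
rewrite natrM mulrA mulNr powRrM powR_mulrn ?powR_ge0 //.
apply: lerXn2r; rewrite ?nnegrE ?powR_ge0 ?invr_ge0 //.
have -> : (2:R)^-1 = 2 `^ (-1) by rewrite powRN powRr1.
apply: ler_powR; first lra.
by rewrite lerN2.
Qed.


Lemma upper (hX : mcompact d) (t eps : R) (x0 : X) : 0 < t -> 0 < eps ->
  forall n, (bowenC d T (Per T) t n eps <= ((2:R)^-1 ^+ n)%:E)%E.
Proof.
move=> tp ep.
have [G HG] : {G : nat -> nat -> X & forall k y, iter k T y = y -> exists i,
    iter k T (G k i) = G k i /\ forall j, (j < k)%N -> d (iter j T (G k i)) (iter j T y) <= eps}.
  apply: (@choice nat (nat -> X) (fun k g => forall y, iter k T y = y -> exists i,
    iter k T (g i) = g i /\ forall j, (j < k)%N -> d (iter j T (g i)) (iter j T y) <= eps)) => k.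
  exact: fix_cover.
pose K := (Num.Def.trunc t^-1).+1.
have tK : 1 <= t * K%:R.
  have := truncnS_gt t^-1; rewrite -(ltr_pM2l tp) mulfV ?gt_eqF // => h.
  exact: ltW.
move=> n.
pose c (p : nat) : option (X * nat) :=
  if (unpickle p : option (nat * nat)) is Some (k, i)
  then Some (G k i, (K * (n + p).+1)%N) else None.
have cc : is_bowen_cover d T (Per T) n eps c.
  split.
    move=> y [k [k0 hk]]; have [i [hGi Hd]] := HG k y hk.
    exists (pickle (k, i)), (G k i), (K * (n + pickle (k, i)).+1)%N.
    rewrite /c pickleK; split => //.
    exact: (period_ball _ _ _ _ k0 hGi hk Hd).
  move=> p x m; rewrite /c; case: (unpickle p) => [[k i]|] // [_ <-].
  apply: (leq_trans _ (leq_pmull _ (ltn0Sn _))).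
  by apply: ltnW; rewrite ltnS leq_addr.
apply: (@le_trans _ _ (cover_cost t c)).
  by apply: ereal_inf_lbound; exists c.
apply: cost_bound => p; rewrite /c.
case: (unpickle p) => [[k i]|]; last by rewrite lee_fin exprn_ge0 // invr_ge0.
by rewrite lee_fin pow_bound.
Qed.

Lemma lower (t eps : R) y0 : t <= 0 -> Per T y0 ->
  forall n, (1 <= bowenC d T (Per T) t n eps)%E.
Proof.
move=> t0 hy n; apply: le_ereal_inf_tmp => _ [c [cv cm] <-].
have [i [x [m [ci _]]]] := cv y0 hy.
rewrite /cover_cost.
have h0 : forall p, (0 <= p)%N -> true ->
  (0 <= match c p with Some (_, m) => ((2 : R) `^ (- t * m%:R))%:E | None => 0%E end)%E.
  by move=> p _ _; case: (c p) => [[_ m']|] //; rewrite lee_fin powR_ge0.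
apply: le_trans (nneseries_lim_ge i.+1 h0).
rewrite big_nat_recr //= ci addeC.
apply: le_trans (leeDl _ _); last by apply: sume_ge0 => j _; exact: h0.
have -> : (1 : \bar R)%E = ((2:R) `^ 0)%:E by rewrite powRr0.
rewrite lee_fin; apply: ler_powR; first lra.
by apply: mulr_ge0; rewrite // oppr_ge0.
Qed.

End S.

Theorem mainTheorem12 (R : realType) (X : Type) (d : X -> X -> R) (T : X -> X)
  (hd : is_metric d) (hX : mcompact d) (hT : mcontinuous d T) :
  Per T = set0 \/ bowen_h d T (Per T) eps @[eps --> 0^'+] --> 0%E.
Proof.
case: (EM (exists y, Per T y)) => [[y0 hy0]|hn]; last first.
  left; apply/seteqP; split => x // hx; apply: hn; by exists x.
right; apply: cvg_near_cst.
apply: filterS (@nbhs_right_gt R 0) => eps ep.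
have conv : forall t, 0 < t -> bowenC d T (Per T) t n eps @[n --> \oo] --> 0%E.
  move=> t tp.
  apply: (@squeeze_cvge _ _ _ _ (fun=> 0%E) _ (fun n => ((2:R)^-1 ^+ n)%:E)).
  - apply: nearW => n; apply/andP; split.
      apply: le_ereal_inf_tmp => _ [c _ <-].
      rewrite /cover_cost; apply: nneseries_ge0 => p _ _.
      by case: (c p) => [[_ m]|] //; rewrite lee_fin powR_ge0.
    exact: (upper _ _ _ _ hd hT hX _ _ y0 tp ep n).
  - exact: cvg_cst.
  - apply: cvg_EFin; first exact: nearW.
    apply: cvg_expr; rewrite ger0_norm ?invr_ge0 //; lra.
apply/eqP; rewrite eq_le; apply/andP; split.
  apply/lee_addgt0Pr => e e0; rewrite add0e.
  by apply: ereal_inf_lbound; exists e => //; exact: conv.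
apply: le_ereal_inf_tmp => _ [t tc <-].
have [t0|t0] := leP t 0; last by rewrite lee_fin ltW.
exfalso.
have : (1 <= limn (fun n => bowenC d T (Per T) t n eps))%E.
  apply: lime_ge; first exact: cvgP tc.
  by apply: nearW => n; exact: (lower _ _ d T t eps y0 t0 hy0).
by rewrite (cvg_lim _ tc) // lee_fin ler10.
Qed.
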